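(* Let $F:B_{++}\to V_{++}$ be continuously differentiable (on an open neighbourhood of $B_{++}$ in $V_{++}$), with components $F_{w_{i,j}}$ ($i\in[K]$, $j\in[n_1]$) and $F_{u_{ab}}$ ($a\in[n_1]$, $b\in[d]$). Suppose $A\in\mathbb{R}^{(K+1)\times(K+1)}_+$ satisfies, for all $i,k\in[K]$, $j,a\in[n_1]$, $b\in[d]$ and $(w,u)\in B_{++}$, $$\langle|\nabla_{w_k}F_{w_{i,j}}(w,u)|,w_k\rangle\le A_{i,k}F_{w_{i,j}}(w,u),\qquad \langle|\nabla_u F_{w_{i,j}}(w,u)|,u\rangle\le A_{i,K+1}F_{w_{i,j}}(w,u),$$ $$\langle|\nabla_{w_k}F_{u_{ab}}(w,u)|,w_k\rangle\le A_{K+1,k}F_{u_{ab}}(w,u),\qquad \langle|\nabla_u F_{u_{ab}}(w,u)|,u\rangle\le A_{K+1,K+1}F_{u_{ab}}(w,u),$$ where $|\cdot|$ is the entrywise absolute value and $\langle\cdot,\cdot\rangle$ the Euclidean (Frobenius) inner product. Then for every $\gamma\in\mathbb{R}^{K+1}_{++}$ and all $(w,u),(\tilde w,\tilde u)\in B_{++}$, $$\mu_\gamma\big(F(w,u),F(\tilde w,\tilde u)\big)\le U\,\mu_\gamma\big((w,u),(\tilde w,\tilde u)\big),\qquad U=\max_{k\in[K+1]}\frac{(A^T\gamma)_k}{\gamma_k}.$$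
   Context: $\mathbb{R}_{++}=(0,\infty)$. $V_{++}=\mathbb{R}^{K\times n_1}_{++}\times\mathbb{R}^{n_1\times d}_{++}$; $w$ has rows $w_1,\dots,w_K$. Given $p_w,p_u\in(1,\infty)$ and $\rho_w,\rho_u>0$, $B_{++}=\{(w,u)\in V_{++} : \|u\|_{p_u}\le\rho_u,\ \|w_i\|_{p_w}\le\rho_w\ \forall i\in[K]\}$ ($\|u\|_{p_u}$ is the entrywise $\ell_{p_u}$ norm). For $\gamma\in\mathbb{R}^{K+1}_{++}$ the weighted Thompson metric on $B_{++}$ is $$\mu_\gamma\big((w,u),(\tilde w,\tilde u)\big)=\sum_{i=1}^K\gamma_i\|\ln(w_i)-\ln(\tilde w_i)\|_\infty+\gamma_{K+1}\|\ln(u)-\ln(\tilde u)\|_\infty,$$ with $\ln$ applied entrywise and $\|\cdot\|_\infty$ the maximum absolute entry. *)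

(* Defs.v *)
From Stdlib Require Import Reals Lra Lia Arith Compare_dec.
Open Scope R_scope.

(* index set [n] = {0,...,n-1} (0-based) *)
Definition Ix (n : nat) : Type := {i : nat | (i < n)%nat}.

Definition ix_eqb {n} (i j : Ix n) : bool := Nat.eqb (proj1_sig i) (proj1_sig j).

(* coordinates of V = R^{K x n1} x R^{n1 x d}:
   inl (i,j) is w_{i,j}, inr (a,b) is u_{a,b} *)
Definition coord (K n1 d : nat) : Type := ((Ix K * Ix n1) + (Ix n1 * Ix d))%type.

Definition coord_eqb {K n1 d} (c c' : coord K n1 d) : bool :=
  match c, c' with
  | inl (i, j), inl (i', j') => ix_eqb i i' && ix_eqb j j'
  | inr (a, b), inr (a', b') => ix_eqb a a' && ix_eqb b b'
  | _, _ => false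
  end.

Definition pt (K n1 d : nat) : Type := coord K n1 d -> R.

Definition wc {K n1 d} (p : pt K n1 d) (i : Ix K) (j : Ix n1) : R := p (inl (i, j)).
Definition uc {K n1 d} (p : pt K n1 d) (a : Ix n1) (b : Ix d) : R := p (inr (a, b)).

Definition upd {K n1 d} (p : pt K n1 d) (c : coord K n1 d) (t : R) : pt K n1 d :=
  fun c' => if coord_eqb c c' then p c' + t else p c'.

Fixpoint sumN (n : nat) (g : nat -> R) : R :=
  match n with O => 0 | S m => sumN m g + g m end.
Fixpoint maxN (n : nat) (g : nat -> R) : R :=
  match n with O => 0 | S m => Rmax (maxN m g) (g m) end.

Definition ext {n} (f : Ix n -> R) (i : nat) : R :=
  match lt_dec i n with left h => f (exist _ i h) | right _ => 0 end.

Definition sumIx (n : nat) (f : Ix n -> R) : R := sumN n (ext f).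
(* maximum over [n]; used only for nonnegative families (0 for n = 0) *)
Definition maxIx (n : nat) (f : Ix n -> R) : R := maxN n (ext f).

(* s^{1/p}, with 0^{1/p} = 0 *)
Definition rootp (s p : R) : R := if Req_EM_T s 0 then 0 else Rpower s (/ p).

Definition norm_w_row {K n1 d} (p : pt K n1 d) (pw : R) (i : Ix K) : R :=
  rootp (sumIx n1 (fun j => Rpower (Rabs (wc p i j)) pw)) pw.
Definition norm_u {K n1 d} (p : pt K n1 d) (pu : R) : R :=
  rootp (sumIx n1 (fun a => sumIx d (fun b => Rpower (Rabs (uc p a b)) pu))) pu.

Definition Vpp {K n1 d} (p : pt K n1 d) : Prop := forall c, 0 < p c.

Definition Bpp {K n1 d} (pw pu rw ru : R) (p : pt K n1 d) : Prop :=
  Vpp p /\ norm_u p pu <= ru /\ (forall i, norm_w_row p pw i <= rw).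

(* openness in V (w.r.t. the max-norm, equivalent to any norm) *)
Definition open_V {K n1 d} (O : pt K n1 d -> Prop) : Prop :=
  forall p, O p -> exists r, 0 < r /\
    forall q, (forall c, Rabs (q c - p c) < r) -> O q.

(* F is C^1 on O with partial derivatives dF c c' = d F_c / d x_{c'} *)
Definition C1_on {K n1 d} (O : pt K n1 d -> Prop) (F : pt K n1 d -> pt K n1 d)
  (dF : coord K n1 d -> coord K n1 d -> pt K n1 d -> R) : Prop :=
  (forall p c c', O p -> derivable_pt_lim (fun t => F (upd p c' t) c) 0 (dF c c' p)) /\
  (forall c c' p, O p -> forall eps, 0 < eps -> exists delta, 0 < delta /\
     forall q, O q -> (forall e, Rabs (q e - p e) < delta) ->
       Rabs (dF c c' q - dF c c' p) < eps).

(* weighted Thompson metric; gamma is 0-based: gamma i (i < K) for w_i, gamma K for u *)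
Definition mu_gamma {K n1 d} (gamma : nat -> R) (p q : pt K n1 d) : R :=
  sumIx K (fun i => gamma (proj1_sig i) *
     maxIx n1 (fun j => Rabs (ln (wc p i j) - ln (wc q i j))))
  + gamma K * maxIx n1 (fun a => maxIx d (fun b => Rabs (ln (uc p a b) - ln (uc q a b)))).

Definition gw {K n1 d} (dF : coord K n1 d -> coord K n1 d -> pt K n1 d -> R)
  (c : coord K n1 d) (k : Ix K) (p : pt K n1 d) : R :=
  sumIx n1 (fun l => Rabs (dF c (inl (k, l)) p) * wc p k l).
Definition gu {K n1 d} (dF : coord K n1 d -> coord K n1 d -> pt K n1 d -> R)
  (c : coord K n1 d) (p : pt K n1 d) : R :=
  sumIx n1 (fun a => sumIx d (fun b => Rabs (dF c (inr (a, b)) p) * uc p a b)).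

Definition Ubound (K : nat) (A : nat -> nat -> R) (gamma : nat -> R) : R :=
  maxN (S K) (fun k => sumN (S K) (fun i => A i k * gamma i) / gamma k).

(* Main.v *)
Require Import Defs.
From Stdlib Require Import Reals.
Open Scope R_scope.
From Stdlib Require Import Lra Lia Arith Compare_dec List FunctionalExtensionality.
Require Import Defs.

Lemma Ix_eq {n} (i j : Ix n) : proj1_sig i = proj1_sig j -> i = j.
Proof.
  destruct i as [i hi], j as [j hj]; simpl; intros ->.
  f_equal; apply Peano_dec.le_unique.
Qed.

Lemma ix_eqb_spec {n} (i j : Ix n) : ix_eqb i j = true <-> i = j.
Proof.
  unfold ix_eqb; rewrite Nat.eqb_eq; split; [apply Ix_eq| intros ->; reflexivity].
Qed.

Lemma coord_eqb_spec {K n1 d} (c c' : coord K n1 d) : coord_eqb c c' = true <-> c = c'.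
Proof.
  destruct c as [[i j]|[a b]], c' as [[i' j']|[a' b']]; simpl;
  try (split; [discriminate| congruence]);
  rewrite Bool.andb_true_iff, !ix_eqb_spec; split;
  (intros [-> ->]; reflexivity) || (intros H; inversion H; auto).
Qed.

Lemma coord_eq_dec {K n1 d} (c c' : coord K n1 d) : {c = c'} + {c <> c'}.
Proof.
  destruct (coord_eqb c c') eqn:E.
  - left; apply coord_eqb_spec; auto.
  - right; intros H; apply coord_eqb_spec in H; congruence.
Qed.

Lemma upd_same {K n1 d} (p : pt K n1 d) c t : upd p c t c = p c + t.
Proof. unfold upd; rewrite (proj2 (coord_eqb_spec c c) eq_refl); auto. Qed.

Lemma upd_other {K n1 d} (p : pt K n1 d) c c' t : c <> c' -> upd p c t c' = p c'.
Proof.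
  intros H; unfold upd; destruct (coord_eqb c c') eqn:E; auto.
  apply coord_eqb_spec in E; congruence.
Qed.

Lemma upd_upd {K n1 d} (p : pt K n1 d) c t h : upd (upd p c t) c h = upd p c (t + h).
Proof.
  apply functional_extensionality; intros c'; destruct (coord_eq_dec c c') as [<-|H].
  - rewrite !upd_same; ring.
  - rewrite !upd_other; auto.
Qed.

Lemma upd_0 {K n1 d} (p : pt K n1 d) c : upd p c 0 = p.
Proof.
  apply functional_extensionality; intros c'; destruct (coord_eq_dec c c') as [<-|H].
  - rewrite !upd_same; ring.
  - rewrite !upd_other; auto.
Qed.

Fixpoint lx (n m : nat) : (m <= n)%nat -> list (Ix n) :=
  match m return (m <= n)%nat -> list (Ix n) with
  | O => fun _ => nil
  | S m' => fun H => exist _ m' H :: lx n m' (Nat.lt_le_incl _ _ H)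
  end.

Lemma lx_in n m H (i : Ix n) : (proj1_sig i < m)%nat -> In i (lx n m H).
Proof.
  induction m; simpl; intros Hi; [lia|].
  destruct (Nat.eq_dec (proj1_sig i) m) as [E|E].
  - left; apply Ix_eq; simpl; auto.
  - right; apply IHm; lia.
Qed.

Lemma lx_bound n m H (i : Ix n) : In i (lx n m H) -> (proj1_sig i < m)%nat.
Proof.
  induction m; simpl; [tauto|]. intros [<-|Hi]; simpl; [lia|]. specialize (IHm _ Hi); lia.
Qed.

Lemma lx_nodup n m H : NoDup (lx n m H).
Proof.
  induction m; simpl; constructor; auto.
  intros Hi; apply lx_bound in Hi; simpl in Hi; lia.
Qed.

Definition allI n : list (Ix n) := lx n n (le_n n).

Lemma allI_in n (i : Ix n) : In i (allI n).
Proof. apply lx_in; destruct i; simpl; auto. Qed.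

Lemma allI_nodup n : NoDup (allI n).
Proof. apply lx_nodup. Qed.

Definition lsum {A} (L : list A) (f : A -> R) : R := fold_right (fun c acc => f c + acc) 0 L.

Lemma lsum_lx n m H (f : Ix n -> R) : lsum (lx n m H) f = sumN m (ext f).
Proof.
  induction m; simpl; auto. rewrite IHm.
  replace (ext f m) with (f (exist _ m H)). ring.
  unfold ext; destruct (lt_dec m n) as [h|h]; [|lia].
  f_equal; apply Ix_eq; reflexivity.
Qed.

Lemma lsum_allI n f : lsum (allI n) f = sumIx n f.
Proof. apply lsum_lx. Qed.

Lemma lsum_app {A} (L1 L2 : list A) f : lsum (L1 ++ L2) f = lsum L1 f + lsum L2 f.
Proof. induction L1; simpl; auto. ring. rewrite IHL1; ring. Qed.

Lemma lsum_map {A B} (g : A -> B) L f : lsum (map g L) f = lsum L (fun x => f (g x)).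
Proof. induction L; simpl; auto. rewrite IHL; auto. Qed.

Lemma lsum_flat_map {A B} (g : A -> list B) L f :
  lsum (flat_map g L) f = lsum L (fun x => lsum (g x) f).
Proof. induction L; simpl; auto. rewrite lsum_app, IHL; auto. Qed.

Lemma lsum_le {A} (L : list A) f g : (forall x, In x L -> f x <= g x) -> lsum L f <= lsum L g.
Proof.
  induction L; simpl; intros H; [lra|].
  apply Rplus_le_compat; auto.
Qed.

Lemma lsum_ext {A} (L : list A) f g : (forall x, In x L -> f x = g x) -> lsum L f = lsum L g.
Proof. induction L; simpl; intros H; auto. rewrite H, IHL; auto. Qed.

Lemma lsum_abs {A} (L : list A) f : Rabs (lsum L f) <= lsum L (fun x => Rabs (f x)).
Proof.
  induction L; simpl. rewrite Rabs_R0; lra.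
  eapply Rle_trans; [apply Rabs_triang|]. lra.
Qed.

Lemma lsum_plus {A} (L : list A) f g : lsum L (fun x => f x + g x) = lsum L f + lsum L g.
Proof. induction L; simpl; auto. ring. rewrite IHL; ring. Qed.

Lemma lsum_minus {A} (L : list A) f g : lsum L (fun x => f x - g x) = lsum L f - lsum L g.
Proof. induction L; simpl; auto. ring. rewrite IHL; ring. Qed.

Lemma lsum_scal {A} (L : list A) a f : lsum L (fun x => a * f x) = a * lsum L f.
Proof. induction L; simpl; auto. ring. rewrite IHL; ring. Qed.

Lemma lsum_nonneg {A} (L : list A) f : (forall x, In x L -> 0 <= f x) -> 0 <= lsum L f.
Proof. induction L; simpl; intros H; [lra|]. pose proof (H a (or_introl eq_refl)). pose proof (IHL (fun x h => H x (or_intror h))). lra. Qed.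

Definition allc K n1 d : list (coord K n1 d) :=
  flat_map (fun k => map (fun l => inl (k, l)) (allI n1)) (allI K) ++
  flat_map (fun a => map (fun b => inr (a, b)) (allI d)) (allI n1).

Lemma allc_in {K n1 d} (c : coord K n1 d) : In c (allc K n1 d).
Proof.
  unfold allc; apply in_or_app; destruct c as [[i j]|[a b]].
  - left; apply in_flat_map; exists i; split; [apply allI_in|].
    apply (in_map (fun l => inl (i, l))); apply allI_in.
  - right; apply in_flat_map; exists a; split; [apply allI_in|].
    apply (in_map (fun b0 => inr (a, b0))); apply allI_in.
Qed.

Lemma NoDup_flat_map {A B} (g : A -> list B) L :
  NoDup L -> (forall x, NoDup (g x)) ->
  (forall x y z, In z (g x) -> In z (g y) -> x = y) -> NoDup (flat_map g L).
Proof.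
  induction L; simpl; intros HL Hg Hd; [constructor|].
  inversion HL; subst. apply NoDup_app; auto.
  intros z Hz Hz'. apply in_flat_map in Hz'. destruct Hz' as [y [Hy Hzy]].
  assert (a = y) by (eapply Hd; eauto). subst; tauto.
Qed.

Lemma NoDup_map_inj {A B} (f : A -> B) L : (forall x y, f x = f y -> x = y) -> NoDup L -> NoDup (map f L).
Proof.
  intros Hf HL; induction HL; simpl; constructor; auto.
  intros Hin; apply in_map_iff in Hin; destruct Hin as [y [Hy Hy']].
  apply Hf in Hy; subst; tauto.
Qed.

Lemma allc_nodup K n1 d : NoDup (allc K n1 d).
Proof.
  unfold allc; apply NoDup_app.
  - apply NoDup_flat_map; [apply allI_nodup| |].
    + intros; apply NoDup_map_inj; [intros x0 y0 H0; congruence| apply allI_nodup].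
    + intros x y z H1 H2; apply in_map_iff in H1, H2.
      destruct H1 as [x1 [<- _]], H2 as [x2 [H _]]; congruence.
  - apply NoDup_flat_map; [apply allI_nodup| |].
    + intros; apply NoDup_map_inj; [intros x0 y0 H0; congruence| apply allI_nodup].
    + intros x y z H1 H2; apply in_map_iff in H1, H2.
      destruct H1 as [x1 [<- _]], H2 as [x2 [H _]]; congruence.
  - intros z H1 H2; apply in_flat_map in H1, H2.
    destruct H1 as [? [_ H1]], H2 as [? [_ H2]].
    apply in_map_iff in H1, H2. destruct H1 as [x1 [<- _]], H2 as [x2 [H _]]; congruence.
Qed.

Lemma lsum_allc {K n1 d} (f : coord K n1 d -> R) :
  lsum (allc K n1 d) f = sumIx K (fun k => sumIx n1 (fun l => f (inl (k, l))))
    + sumIx n1 (fun a => sumIx d (fun b => f (inr (a, b)))).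
Proof.
  unfold allc; rewrite lsum_app, !lsum_flat_map, <- !lsum_allI.
  f_equal; apply lsum_ext; intros; rewrite lsum_map, lsum_allI; auto.
Qed.

Lemma fin_delta {A} (L : list A) (P : A -> R -> Prop) :
  (forall x d1 d2, 0 < d1 <= d2 -> P x d2 -> P x d1) ->
  (forall x, In x L -> exists d, 0 < d /\ P x d) ->
  exists d, 0 < d /\ forall x, In x L -> P x d.
Proof.
  intros Hm; induction L; simpl; intros H.
  - exists 1; split; [lra| tauto].
  - destruct (H a (or_introl eq_refl)) as [d1 [Hd1 P1]].
    destruct IHL as [d2 [Hd2 P2]]; [intros; apply H; auto|].
    exists (Rmin d1 d2); split; [apply Rmin_pos; auto|].
    intros x [<-|Hx]; eapply Hm; eauto; split; try apply Rmin_pos; auto;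
    [apply Rmin_l| apply Rmin_r].
Qed.


Lemma deriv_shift f tau l :
  derivable_pt_lim (fun h => f (tau + h)) 0 l -> derivable_pt_lim f tau l.
Proof.
  unfold derivable_pt_lim; intros H eps Heps.
  destruct (H eps Heps) as [del Hd]; exists del; intros h Hh Hh'.
  specialize (Hd h Hh Hh'). rewrite !Rplus_0_l, Rplus_0_r in Hd. exact Hd.
Qed.

Lemma lip_bound (phi phi' : R -> R) D eta :
  (forall t, Rmin 0 D <= t <= Rmax 0 D -> derivable_pt_lim phi t (phi' t)) ->
  (forall t, Rmin 0 D <= t <= Rmax 0 D -> Rabs (phi' t) <= eta) ->
  Rabs (phi D - phi 0) <= eta * Rabs D.
Proof.
  intros Hd Hb.
  destruct (Rtotal_order 0 D) as [HD|[HD|HD]].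
  - destruct (MVT_cor2 phi phi' 0 D HD) as [c [Hc Hc']].
    { intros c Hc; apply Hd; rewrite Rmin_left, Rmax_right; lra. }
    rewrite Hc, Rminus_0_r, Rabs_mult. apply Rmult_le_compat_r; [apply Rabs_pos|].
    apply Hb; rewrite Rmin_left, Rmax_right; lra.
  - subst; unfold Rminus; rewrite Rplus_opp_r, Rabs_R0; lra.
  - destruct (MVT_cor2 phi phi' D 0 HD) as [c [Hc Hc']].
    { intros c Hc; apply Hd; rewrite Rmin_right, Rmax_left; lra. }
    replace (phi D - phi 0) with (- (phi 0 - phi D)) by ring.
    rewrite Rabs_Ropp, Hc, Rabs_mult. replace (0 - D) with (- D) by ring.
    rewrite (Rabs_Ropp D). apply Rmult_le_compat_r; [apply Rabs_pos|].
    apply Hb; rewrite Rmin_right, Rmax_left; lra.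
Qed.

Section Chain.
Context {K n1 d : nat} (F : pt K n1 d -> pt K n1 d)
  (dF : coord K n1 d -> coord K n1 d -> pt K n1 d -> R)
  (Om : pt K n1 d -> Prop) (hOopen : open_V Om) (hC1 : C1_on Om F dF).

Lemma lemA p0 c c0 eta : Om p0 -> 0 < eta -> exists del, 0 < del /\
  forall Z D, (forall c'', Rabs (Z c'' - p0 c'') < del) -> Rabs (Z c0 + D - p0 c0) < del ->
  Rabs (F (upd Z c0 D) c - F Z c - dF c c0 p0 * D) <= eta * Rabs D.
Proof.
  intros Hp0 Heta.
  destruct (hOopen p0 Hp0) as [r [Hr HrO]].
  destruct (proj2 hC1 c c0 p0 Hp0 eta Heta) as [d1 [Hd1 Hcont]].
  exists (Rmin r d1); split; [apply Rmin_pos; auto|].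
  intros Z D HZ HZD.
  assert (Hr1 : Rmin r d1 <= r) by apply Rmin_l.
  assert (Hd1' : Rmin r d1 <= d1) by apply Rmin_r.
  assert (Hpt : forall t, Rmin 0 D <= t <= Rmax 0 D ->
     forall c'', Rabs (upd Z c0 t c'' - p0 c'') < Rmin r d1).
  { intros t Ht c''. destruct (coord_eq_dec c0 c'') as [<-|Hne].
    - rewrite upd_same. specialize (HZ c0).
      unfold Rmin, Rmax in Ht; destruct (Rle_dec 0 D);
      revert HZ HZD; unfold Rabs; repeat destruct Rcase_abs; intros; lra.
    - rewrite upd_other; auto. }
  set (phi := fun t => F (upd Z c0 t) c - dF c c0 p0 * t).
  set (phi' := fun t => dF c c0 (upd Z c0 t) - dF c c0 p0).
  pose proof (lip_bound phi phi' D eta) as Hl.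
  unfold phi in Hl; rewrite upd_0, Rmult_0_r, Rminus_0_r in Hl.
  replace (F (upd Z c0 D) c - F Z c - dF c c0 p0 * D)
    with (F (upd Z c0 D) c - dF c c0 p0 * D - F Z c) by ring.
  apply Hl.
  - intros t Ht. unfold phi'. apply derivable_pt_lim_minus.
    + apply deriv_shift.
      assert (HO : Om (upd Z c0 t)).
      { apply HrO; intros c''; specialize (Hpt t Ht c''); lra. }
      pose proof (proj1 hC1 (upd Z c0 t) c c0 HO) as Hd.
      rewrite <- (functional_extensionality _ _ (fun h => f_equal (fun P => F P c) (upd_upd Z c0 t h))).
      exact Hd.
    + replace (dF c c0 p0) with (dF c c0 p0 * 1) at 2 by ring.
      apply (derivable_pt_lim_scal id). apply derivable_pt_lim_id.
  - intros t Ht. unfold phi'. apply Rlt_le, Hcont.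
    + apply HrO; intros c''; specialize (Hpt t Ht c''); lra.
    + intros c''; specialize (Hpt t Ht c''); lra.
Qed.

Definition zz (p0 y : pt K n1 d) (M : list (coord K n1 d)) : pt K n1 d :=
  fun c' => if in_dec coord_eq_dec c' M then y c' else p0 c'.

Lemma lemB p0 c eta : Om p0 -> 0 < eta -> exists del, 0 < del /\ forall y, (forall c', Rabs (y c' - p0 c') < del) ->
  Rabs (F y c - F p0 c - lsum (allc K n1 d) (fun c' => dF c c' p0 * (y c' - p0 c')))
    <= eta * lsum (allc K n1 d) (fun c' => Rabs (y c' - p0 c')).
Proof.
  intros Hp0 Heta.
  destruct (fin_delta (allc K n1 d) (fun c0 del =>
    forall Z D, (forall c'', Rabs (Z c'' - p0 c'') < del) -> Rabs (Z c0 + D - p0 c0) < del ->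
    Rabs (F (upd Z c0 D) c - F Z c - dF c c0 p0 * D) <= eta * Rabs D)) as [del [Hdel HP]].
  { intros x d1 d2 Hd H Z D H1 H2. apply H; auto. intros c''; specialize (H1 c''); lra. lra. }
  { intros x _; apply lemA; auto. }
  exists del; split; auto. intros y Hy.
  assert (Hgen : forall M, NoDup M -> (forall x, In x M -> In x (allc K n1 d)) ->
    Rabs (F (zz p0 y M) c - F p0 c - lsum M (fun c' => dF c c' p0 * (y c' - p0 c')))
    <= eta * lsum M (fun c' => Rabs (y c' - p0 c'))).
  { induction M as [|c0 M IH]; intros HM HMin.
    - simpl. replace (zz p0 y nil) with p0.
      + unfold Rminus; rewrite Rplus_opp_r, Rplus_0_l, Ropp_0, Rabs_R0; lra.
      + apply functional_extensionality; intros c'; unfold zz; destruct in_dec; simpl in *; tauto.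
    - inversion HM; subst.
      assert (Hz : zz p0 y (c0 :: M) = upd (zz p0 y M) c0 (y c0 - p0 c0)).
      { apply functional_extensionality; intros c'. destruct (coord_eq_dec c0 c') as [<-|Hne].
        - rewrite upd_same. unfold zz. destruct (in_dec coord_eq_dec c0 (c0 :: M)); [|simpl in *; tauto].
          destruct (in_dec coord_eq_dec c0 M); [tauto|]. ring.
        - rewrite upd_other; auto. unfold zz.
          destruct (in_dec coord_eq_dec c' (c0 :: M)) as [G1|G1];
          destruct (in_dec coord_eq_dec c' M) as [G2|G2]; simpl in *; auto.
          + destruct G1; [congruence| tauto].
          + tauto. }
      assert (HA := HP c0 (HMin c0 (or_introl eq_refl)) (zz p0 y M) (y c0 - p0 c0)).
      assert (HA' : Rabs (F (upd (zz p0 y M) c0 (y c0 - p0 c0)) c - F (zz p0 y M) c -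
         dF c c0 p0 * (y c0 - p0 c0)) <= eta * Rabs (y c0 - p0 c0)).
      { apply HA.
        - intros c''; unfold zz; destruct in_dec; auto.
          unfold Rminus; rewrite Rplus_opp_r, Rabs_R0; auto.
        - unfold zz; destruct in_dec; [tauto|].
          replace (p0 c0 + (y c0 - p0 c0) - p0 c0) with (y c0 - p0 c0) by ring; auto. }
      specialize (IH H2 (fun x h => HMin x (or_intror h))).
      rewrite Hz; simpl.
      eapply Rle_trans; [|apply Req_le; symmetry; apply Rmult_plus_distr_l].
      eapply Rle_trans; [|apply Rplus_le_compat; [exact HA'| exact IH]].
      eapply Rle_trans; [|apply Rabs_triang]. apply Req_le; f_equal; ring. }
  replace (F y c) with (F (zz p0 y (allc K n1 d)) c).
  - apply Hgen; auto. apply allc_nodup.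
  - f_equal. apply functional_extensionality; intros c'; unfold zz; destruct in_dec; auto.
    exfalso; apply n; apply allc_in.
Qed.

Lemma lemC p0 c (gam : R -> pt K n1 d) t (v : coord K n1 d -> R) :
  Om p0 -> gam t = p0 -> (forall c', derivable_pt_lim (fun s => gam s c') t (v c')) ->
  derivable_pt_lim (fun s => F (gam s) c) t
    (lsum (allc K n1 d) (fun c' => dF c c' p0 * v c')).
Proof.
  intros Hp0 Hg Hv eps Heps.
  set (L := allc K n1 d).
  set (S1 := lsum L (fun c' => Rabs (dF c c' p0)) + 1).
  set (S2 := lsum L (fun c' => Rabs (v c') + 1) + 1).
  assert (HS1 : 1 <= S1) by (assert (0 <= lsum L (fun c' => Rabs (dF c c' p0)))
     by (apply lsum_nonneg; intros; apply Rabs_pos); unfold S1; lra).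
  assert (HS2 : 1 <= S2) by (assert (0 <= lsum L (fun c' => Rabs (v c') + 1))
     by (apply lsum_nonneg; intros; pose proof (Rabs_pos (v x)); lra); unfold S2; lra).
  set (eta := eps / (2 * S2)).
  assert (Heta : 0 < eta) by (unfold eta; apply Rdiv_lt_0_compat; lra).
  set (e1 := Rmin 1 (eps / (2 * S1))).
  assert (He1 : 0 < e1) by (unfold e1; apply Rmin_pos; [lra| apply Rdiv_lt_0_compat; lra]).
  destruct (lemB p0 c eta Hp0 Heta) as [dB [HdB HB]].
  destruct (fin_delta L (fun c' del => forall h, h <> 0 -> Rabs h < del ->
     Rabs ((gam (t + h) c' - gam t c') / h - v c') < e1 /\ Rabs (gam (t + h) c' - p0 c') < dB))
     as [del [Hdel HP]].
  { intros x d1 d2 Hd H h Hh Hh'. apply H; auto; lra. }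
  { intros c' _. destruct (Hv c' e1 He1) as [[d0 Hd0] Hd0'].
    set (m := Rabs (v c') + 1).
    assert (Hm : 0 < m) by (unfold m; pose proof (Rabs_pos (v c')); lra).
    exists (Rmin d0 (dB / m)); split; [apply Rmin_pos; auto; apply Rdiv_lt_0_compat; auto|].
    intros h Hh Hh'.
    assert (Hh0 : Rabs h < d0) by (pose proof (Rmin_l d0 (dB/m)); lra).
    assert (Hh1 : Rabs h < dB / m) by (pose proof (Rmin_r d0 (dB/m)); lra).
    specialize (Hd0' h Hh Hh0). simpl in Hd0'. split; auto.
    assert (Hq : Rabs ((gam (t + h) c' - gam t c') / h) <= m).
    { unfold m. assert (e1 <= 1) by apply Rmin_l.
      pose proof (Rabs_triang_inv ((gam (t + h) c' - gam t c') / h) (v c')). lra. }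
    rewrite <- Hg.
    replace (gam (t + h) c' - gam t c') with (h * ((gam (t + h) c' - gam t c') / h))
      by (field; auto).
    rewrite Rabs_mult.
    assert (Rabs h * m < dB).
    { apply (Rmult_lt_compat_r m) in Hh1; auto. unfold Rdiv in Hh1.
      rewrite Rmult_assoc, Rinv_l, Rmult_1_r in Hh1; lra. }
    pose proof (Rabs_pos h).
    pose proof (Rmult_le_compat_l (Rabs h) _ _ (Rabs_pos h) Hq). lra. }
  exists (mkposreal del Hdel). intros h Hh Hh'. simpl in Hh'.
  assert (HPh : forall c', In c' L -> Rabs ((gam (t + h) c' - gam t c') / h - v c') < e1 /\
     Rabs (gam (t + h) c' - p0 c') < dB) by (intros c' Hc'; apply HP; auto).
  specialize (HB (gam (t + h)) (fun c' => proj2 (HPh c' (allc_in c')))).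
  fold L in HB. rewrite Hg.
  set (q := fun c' => (gam (t + h) c' - p0 c') / h).
  set (E := F (gam (t + h)) c - F p0 c - lsum L (fun c' => dF c c' p0 * (gam (t + h) c' - p0 c'))).
  assert (Heq : (F (gam (t + h)) c - F p0 c) / h - lsum L (fun c' => dF c c' p0 * v c')
     = E / h + lsum L (fun c' => dF c c' p0 * (q c' - v c'))).
  { assert (lsum L (fun c' => dF c c' p0 * (q c' - v c'))
       = / h * lsum L (fun x => dF c x p0 * (gam (t + h) x - p0 x)) - lsum L (fun c' => dF c c' p0 * v c')).
    { rewrite <- lsum_scal, <- lsum_minus. apply lsum_ext; intros; unfold q; field; auto. }
    rewrite H. unfold E. field; auto. }
  rewrite Heq.
  assert (H1 : Rabs (E / h) <= eps / 2).
  { unfold Rdiv at 1; rewrite Rabs_mult, Rabs_inv.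
    assert (Hhp : 0 < Rabs h) by (apply Rabs_pos_lt; auto).
    apply (Rmult_le_reg_r (Rabs h)); auto. rewrite Rmult_assoc, Rinv_l, Rmult_1_r by lra.
    eapply Rle_trans; [apply HB|].
    assert (lsum L (fun c' => Rabs (gam (t + h) c' - p0 c')) <= Rabs h * (S2 - 1)).
    { unfold S2. replace (lsum L (fun c' => Rabs (v c') + 1) + 1 - 1) with (lsum L (fun c' => Rabs (v c') + 1)) by ring.
      rewrite <- lsum_scal. apply lsum_le. intros c' Hc'.
      destruct (HPh c' Hc') as [Hq _].
      replace (gam (t + h) c' - p0 c') with (h * ((gam (t + h) c' - gam t c') / h))
        by (rewrite <- Hg; field; auto).
      rewrite Rabs_mult. apply Rmult_le_compat_l; [lra|].
      assert (e1 <= 1) by apply Rmin_l.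
      pose proof (Rabs_triang_inv ((gam (t + h) c' - gam t c') / h) (v c')). lra. }
    apply Rmult_le_compat_l with (r := eta) in H; [|lra].
    eapply Rle_trans; [exact H|].
    unfold eta.
    replace (eps / (2 * S2) * (Rabs h * (S2 - 1))) with (eps / 2 * Rabs h * ((S2 - 1) / S2)) by (field; lra).
    rewrite <- (Rmult_1_r (eps / 2 * Rabs h)) at 2.
    apply Rmult_le_compat_l; [apply Rmult_le_pos; lra|].
    apply (Rmult_le_reg_r S2); [lra|]. unfold Rdiv; rewrite Rmult_assoc, Rinv_l; lra. }
  assert (H2 : Rabs (lsum L (fun c' => dF c c' p0 * (q c' - v c'))) < eps / 2).
  { eapply Rle_lt_trans; [apply lsum_abs|].
    apply Rle_lt_trans with (lsum L (fun c' => Rabs (dF c c' p0)) * e1).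
    - rewrite Rmult_comm, <- lsum_scal. apply lsum_le; intros c' Hc'.
      rewrite Rabs_mult, Rmult_comm. apply Rmult_le_compat_r; [apply Rabs_pos|].
      destruct (HPh c' Hc') as [Hq _]. rewrite Hg in Hq. unfold q; lra.
    - assert (e1 <= eps / (2 * S1)) by apply Rmin_r.
      apply Rlt_le_trans with (S1 * e1); [unfold S1; lra|].
      apply Rmult_le_compat_l with (r := S1) in H; [|lra].
      eapply Rle_trans; [exact H|]. apply Req_le; field; lra. }
  eapply Rle_lt_trans; [apply Rabs_triang|]. lra.
Qed.
End Chain.


Lemma maxN_ge0 (n : nat) (g : nat -> R) : 0 <= maxN n g.
Proof. induction n; simpl; [lra|]. eapply Rle_trans; [exact IHn| apply Rmax_l]. Qed.

Lemma maxN_ge (n : nat) (g : nat -> R) (i : nat) : (i < n)%nat -> g i <= maxN n g.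
Proof.
  induction n; simpl; intros H; [lia|].
  destruct (Nat.eq_dec i n) as [->|Hn]; [apply Rmax_r|].
  eapply Rle_trans; [apply IHn; lia| apply Rmax_l].
Qed.

Lemma maxN_le (n : nat) (g : nat -> R) (T : R) : 0 <= T -> (forall i, (i < n)%nat -> g i <= T) -> maxN n g <= T.
Proof.
  induction n; simpl; intros HT H; auto.
  apply Rmax_lub; auto.
Qed.

Lemma ext_val {n} (f : Ix n -> R) (i : Ix n) : ext f (proj1_sig i) = f i.
Proof.
  unfold ext; destruct (lt_dec (proj1_sig i) n) as [h|h].
  - f_equal; apply Ix_eq; reflexivity.
  - destruct i; simpl in *; lia.
Qed.

Lemma maxIx_ge (n : nat) (f : Ix n -> R) (j : Ix n) : f j <= maxIx n f.
Proof. unfold maxIx; rewrite <- ext_val. apply maxN_ge. destruct j; auto. Qed.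

Lemma maxIx_ge0 (n : nat) (f : Ix n -> R) : 0 <= maxIx n f.
Proof. apply maxN_ge0. Qed.

Lemma maxIx_le (n : nat) (f : Ix n -> R) (T : R) : 0 <= T -> (forall j, f j <= T) -> maxIx n f <= T.
Proof.
  intros HT H; apply maxN_le; auto. intros i Hi.
  unfold ext; destruct (lt_dec i n); [apply H| lia].
Qed.

Lemma sumN_ext (n : nat) (f g : nat -> R) : (forall i, (i < n)%nat -> f i = g i) -> sumN n f = sumN n g.
Proof. induction n; simpl; intros H; auto. rewrite IHn, H; auto. Qed.

Lemma sumN_le (n : nat) (f g : nat -> R) : (forall i, (i < n)%nat -> f i <= g i) -> sumN n f <= sumN n g.
Proof. induction n; simpl; intros H; [lra|]. apply Rplus_le_compat; auto. Qed.

Lemma sumN_plus (n : nat) (f g : nat -> R) : sumN n (fun i => f i + g i) = sumN n f + sumN n g.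
Proof. induction n; simpl; [ring|]. rewrite IHn; ring. Qed.

Lemma sumN_scal (n : nat) (a : R) (f : nat -> R) : sumN n (fun i => a * f i) = a * sumN n f.
Proof. induction n; simpl; [ring|]. rewrite IHn; ring. Qed.

Lemma sumN_exch (n m : nat) (f : nat -> nat -> R) :
  sumN n (fun i => sumN m (fun k => f i k)) = sumN m (fun k => sumN n (fun i => f i k)).
Proof.
  induction n; simpl.
  - induction m; simpl; auto. rewrite <- IHm; ring.
  - rewrite IHn, <- sumN_plus; auto.
Qed.

Lemma sumIx_eq (n : nat) (f : Ix n -> R) (g : nat -> R) : (forall i (h : (i < n)%nat), f (exist _ i h) = g i) -> sumIx n f = sumN n g.
Proof.
  intros H; apply sumN_ext; intros i Hi; unfold ext; destruct (lt_dec i n); [apply H| lia].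
Qed.

Lemma sumIx_le (n : nat) (f g : Ix n -> R) : (forall j, f j <= g j) -> sumIx n f <= sumIx n g.
Proof. intros H; rewrite <- !lsum_allI; apply lsum_le; auto. Qed.

Lemma sumIx_scal (n : nat) (a : R) (f : Ix n -> R) : sumIx n (fun j => a * f j) = a * sumIx n f.
Proof. rewrite <- !lsum_allI; apply lsum_scal. Qed.

Lemma sumIx_plus (n : nat) (f g : Ix n -> R) : sumIx n (fun j => f j + g j) = sumIx n f + sumIx n g.
Proof. rewrite <- !lsum_allI; apply lsum_plus. Qed.

Lemma sumIx_nonneg (n : nat) (f : Ix n -> R) : (forall j, 0 <= f j) -> 0 <= sumIx n f.
Proof. intros H; rewrite <- lsum_allI; apply lsum_nonneg; auto. Qed.

Lemma exp_convex (a b s : R) : 0 <= s <= 1 -> exp ((1 - s) * a + s * b) <= (1 - s) * exp a + s * exp b.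
Proof.
  intros Hs. set (m := (1 - s) * a + s * b).
  pose proof (exp_ineq1_le (a - m)). pose proof (exp_ineq1_le (b - m)).
  assert (exp a = exp m * exp (a - m)) by (rewrite <- exp_plus; f_equal; ring).
  assert (exp b = exp m * exp (b - m)) by (rewrite <- exp_plus; f_equal; ring).
  pose proof (exp_pos m).
  assert (exp m * (1 + (a - m)) <= exp a) by (rewrite H1; apply Rmult_le_compat_l; lra).
  assert (exp m * (1 + (b - m)) <= exp b) by (rewrite H2; apply Rmult_le_compat_l; lra).
  assert ((1 - s) * (exp m * (1 + (a - m))) + s * (exp m * (1 + (b - m))) = exp m)
    by (unfold m; ring).
  nra.
Qed.

Lemma rootp_le (S pw r : R) : 0 <= S -> 0 < pw -> 0 < r -> (rootp S pw <= r <-> S <= Rpower r pw).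
Proof.
  intros HS Hpw Hr; unfold rootp; destruct (Req_EM_T S 0) as [->|Hn].
  - split; intros; [left; apply exp_pos| lra].
  - split; intros H.
    + assert (HSp : 0 < S) by lra.
      replace S with (Rpower (Rpower S (/ pw)) pw).
      * apply Rle_Rpower_l; [lra| split; auto; apply exp_pos].
      * rewrite Rpower_mult, Rinv_l, Rpower_1; lra.
    + replace r with (Rpower (Rpower r pw) (/ pw)).
      * apply Rle_Rpower_l; [left; apply Rinv_0_lt_compat; auto| lra].
      * rewrite Rpower_mult, Rinv_r, Rpower_1; lra.
Qed.


Definition gam {K n1 d} (p q : pt K n1 d) (s : R) : pt K n1 d :=
  fun c => exp (ln (p c) + s * (ln (q c) - ln (p c))).

Lemma gam_pos {K n1 d} (p q : pt K n1 d) s : Vpp (gam p q s).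
Proof. intros c; apply exp_pos. Qed.

Lemma gam_0 {K n1 d} (p q : pt K n1 d) : Vpp p -> gam p q 0 = p.
Proof.
  intros Hp; apply functional_extensionality; intros c; unfold gam.
  rewrite Rmult_0_l, Rplus_0_r, exp_ln; auto.
Qed.

Lemma gam_1 {K n1 d} (p q : pt K n1 d) : Vpp p -> Vpp q -> gam p q 1 = q.
Proof.
  intros Hp Hq; apply functional_extensionality; intros c; unfold gam.
  replace (ln (p c) + 1 * (ln (q c) - ln (p c))) with (ln (q c)) by ring.
  rewrite exp_ln; auto.
Qed.

Lemma gam_deriv {K n1 d} (p q : pt K n1 d) c t :
  derivable_pt_lim (fun s => gam p q s c) t (gam p q t c * (ln (q c) - ln (p c))).
Proof.
  set (a := ln (p c)); set (b := ln (q c) - ln (p c)).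
  assert (H1 : derivable_pt_lim (fun s => a + s * b) t b).
  { intros eps Heps; exists (mkposreal 1 Rlt_0_1); intros h Hh _.
    replace ((a + (t + h) * b - (a + t * b)) / h - b) with 0 by (field; auto).
    rewrite Rabs_R0; auto. }
  pose proof (derivable_pt_lim_comp (fun s => a + s * b) exp t b (exp (a + t * b)) H1
     (derivable_pt_lim_exp _)) as H.
  exact H.
Qed.

Lemma gam_pow {K n1 d} (p q : pt K n1 d) s c r : Vpp p -> Vpp q -> 0 <= s <= 1 ->
  Rpower (Rabs (gam p q s c)) r <= (1 - s) * Rpower (Rabs (p c)) r + s * Rpower (Rabs (q c)) r.
Proof.
  intros Hp Hq Hs. unfold gam.
  rewrite (Rabs_right (exp _)) by (left; apply exp_pos).
  rewrite (Rabs_right (p c)) by (left; apply Hp).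
  rewrite (Rabs_right (q c)) by (left; apply Hq).
  unfold Rpower. rewrite ln_exp.
  replace (r * (ln (p c) + s * (ln (q c) - ln (p c)))) with
    ((1 - s) * (r * ln (p c)) + s * (r * ln (q c))) by ring.
  apply exp_convex; auto.
Qed.

Lemma sumIx_ext (n : nat) (f g : Ix n -> R) : (forall j, f j = g j) -> sumIx n f = sumIx n g.
Proof. intros H; rewrite <- !lsum_allI; apply lsum_ext; auto. Qed.

Lemma comb_le (s X Y R0 : R) : 0 <= s <= 1 -> X <= R0 -> Y <= R0 -> (1 - s) * X + s * Y <= R0.
Proof. intros Hs HX HY.
  apply Rle_trans with ((1 - s) * R0 + s * R0); [|lra].
  apply Rplus_le_compat; apply Rmult_le_compat_l; lra. Qed.

Lemma Rpower_abs_nonneg x r : 0 <= Rpower (Rabs x) r.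
Proof. left; apply exp_pos. Qed.

Lemma gam_B {K n1 d} pw pu rw ru (p q : pt K n1 d) s :
  1 < pw -> 1 < pu -> 0 < rw -> 0 < ru ->
  Bpp pw pu rw ru p -> Bpp pw pu rw ru q -> 0 <= s <= 1 -> Bpp pw pu rw ru (gam p q s).
Proof.
  intros Hpw Hpu Hrw Hru [Hp [Hpu' Hpw']] [Hq [Hqu Hqw]] Hs.
  split; [apply gam_pos|split].
  - unfold norm_u in *.
    assert (Hnn : forall P : pt K n1 d, 0 <= sumIx n1 (fun a => sumIx d (fun b => Rpower (Rabs (uc P a b)) pu)))
      by (intros; apply sumIx_nonneg; intros; apply sumIx_nonneg; intros; apply Rpower_abs_nonneg).
    apply (rootp_le _ pu ru (Hnn _) ltac:(lra) Hru) in Hpu'.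
    apply (rootp_le _ pu ru (Hnn _) ltac:(lra) Hru) in Hqu.
    apply (rootp_le _ pu ru (Hnn _) ltac:(lra) Hru).
    eapply Rle_trans.
    + apply sumIx_le; intros a; apply sumIx_le; intros b; apply gam_pow; auto.
    + set (X := fun a b => Rpower (Rabs (uc p a b)) pu) in *.
      set (Y := fun a b => Rpower (Rabs (uc q a b)) pu) in *.
      replace (sumIx n1 (fun a => sumIx d (fun b => (1 - s) * Rpower (Rabs (p (inr (a, b)))) pu + s * Rpower (Rabs (q (inr (a, b)))) pu)))
       with ((1 - s) * sumIx n1 (fun a => sumIx d (fun b => X a b)) + s * sumIx n1 (fun a => sumIx d (fun b => Y a b))).
      * apply comb_le; auto.
      * rewrite <- !sumIx_scal, <- sumIx_plus. apply sumIx_ext; intros a.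
        rewrite <- !sumIx_scal, <- sumIx_plus. apply sumIx_ext; intros b. reflexivity.
  - intros i. specialize (Hpw' i); specialize (Hqw i). unfold norm_w_row in *.
    assert (Hnn : forall P : pt K n1 d, 0 <= sumIx n1 (fun j => Rpower (Rabs (wc P i j)) pw))
      by (intros; apply sumIx_nonneg; intros; apply Rpower_abs_nonneg).
    apply (rootp_le _ pw rw (Hnn _) ltac:(lra) Hrw) in Hpw'.
    apply (rootp_le _ pw rw (Hnn _) ltac:(lra) Hrw) in Hqw.
    apply (rootp_le _ pw rw (Hnn _) ltac:(lra) Hrw).
    eapply Rle_trans.
    + apply sumIx_le; intros j; apply gam_pow; auto.
    + set (X := fun j => Rpower (Rabs (wc p i j)) pw) in *.
      set (Y := fun j => Rpower (Rabs (wc q i j)) pw) in *.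
      replace (sumIx n1 (fun j => (1 - s) * Rpower (Rabs (p (inl (i, j)))) pw + s * Rpower (Rabs (q (inl (i, j)))) pw))
       with ((1 - s) * sumIx n1 (fun j => X j) + s * sumIx n1 (fun j => Y j)).
      * apply comb_le; auto.
      * rewrite <- !sumIx_scal, <- sumIx_plus. apply sumIx_ext; intros j. reflexivity.
Qed.


Definition dw {K n1 d} (p q : pt K n1 d) (k : Ix K) : R :=
  maxIx n1 (fun j => Rabs (ln (wc p k j) - ln (wc q k j))).
Definition du {K n1 d} (p q : pt K n1 d) : R :=
  maxIx n1 (fun a => maxIx d (fun b => Rabs (ln (uc p a b) - ln (uc q a b)))).

Lemma grad_bound {K n1 d} (dF : coord K n1 d -> coord K n1 d -> pt K n1 d -> R) c
  (p q P : pt K n1 d) (Aw : Ix K -> R) (Au FP : R) :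
  Vpp P ->
  (forall k, gw dF c k P <= Aw k * FP) -> gu dF c P <= Au * FP ->
  Rabs (lsum (allc K n1 d) (fun c' => dF c c' P * (P c' * (ln (q c') - ln (p c')))))
   <= (sumIx K (fun k => Aw k * dw p q k) + Au * du p q) * FP.
Proof.
  intros HP Hw Hu.
  eapply Rle_trans; [apply lsum_abs|]. rewrite lsum_allc.
  rewrite Rmult_plus_distr_r. apply Rplus_le_compat.
  - rewrite Rmult_comm, <- sumIx_scal. apply sumIx_le; intros k.
    apply Rle_trans with (dw p q k * gw dF c k P).
    + unfold gw; rewrite <- sumIx_scal; apply sumIx_le; intros l.
      rewrite !Rabs_mult, (Rabs_right (P _)) by (left; apply HP).
      unfold wc. pose proof (HP (inl (k, l))).
      assert (Rabs (ln (q (inl (k, l))) - ln (p (inl (k, l)))) <= dw p q k).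
      { rewrite Rabs_minus_sym. unfold dw. apply (maxIx_ge n1 (fun j => Rabs (ln (wc p k j) - ln (wc q k j))) l). }
      pose proof (Rabs_pos (dF c (inl (k, l)) P)).
      pose proof (Rabs_pos (ln (q (inl (k, l))) - ln (p (inl (k, l))))).
      apply Rle_trans with (Rabs (dF c (inl (k, l)) P) * (P (inl (k, l)) * dw p q k));
        [apply Rmult_le_compat_l; [lra| apply Rmult_le_compat_l; lra]| right; ring].
    + pose proof (maxIx_ge0 n1 (fun j => Rabs (ln (wc p k j) - ln (wc q k j)))).
      specialize (Hw k). apply Rmult_le_compat_l with (r := dw p q k) in Hw; [|exact H].
      lra.
  - apply Rle_trans with (du p q * gu dF c P).
    + unfold gu; rewrite <- sumIx_scal; apply sumIx_le; intros a.
      rewrite <- sumIx_scal; apply sumIx_le; intros b.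
      rewrite !Rabs_mult, (Rabs_right (P _)) by (left; apply HP).
      unfold uc. pose proof (HP (inr (a, b))).
      assert (Rabs (ln (q (inr (a, b))) - ln (p (inr (a, b)))) <= du p q).
      { rewrite Rabs_minus_sym. unfold du.
        eapply Rle_trans; [|apply (maxIx_ge n1 _ a)].
        apply (maxIx_ge d (fun b => Rabs (ln (uc p a b) - ln (uc q a b))) b). }
      pose proof (Rabs_pos (dF c (inr (a, b)) P)).
      apply Rle_trans with (Rabs (dF c (inr (a, b)) P) * (P (inr (a, b)) * du p q));
        [apply Rmult_le_compat_l; [lra| apply Rmult_le_compat_l; lra]| right; ring].
    + assert (0 <= du p q) by (apply maxIx_ge0).
      apply Rmult_le_compat_l with (r := du p q) in Hu; [|exact H]. lra.
Qed.

Lemma coord_bound {K n1 d : nat} (pw pu rw ru : R)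
  (hpw : 1 < pw) (hpu : 1 < pu) (hrw : 0 < rw) (hru : 0 < ru)
  (F : pt K n1 d -> pt K n1 d)
  (dF : coord K n1 d -> coord K n1 d -> pt K n1 d -> R)
  (Om : pt K n1 d -> Prop)
  (hOopen : open_V Om)
  (hBO : forall p, Bpp pw pu rw ru p -> Om p)
  (hC1 : C1_on Om F dF)
  (hFpos : forall p, Bpp pw pu rw ru p -> Vpp (F p))
  (c : coord K n1 d) (Aw : Ix K -> R) (Au : R)
  (hgw : forall k P, Bpp pw pu rw ru P -> gw dF c k P <= Aw k * F P c)
  (hgu : forall P, Bpp pw pu rw ru P -> gu dF c P <= Au * F P c)
  (p q : pt K n1 d) : Bpp pw pu rw ru p -> Bpp pw pu rw ru q ->
  Rabs (ln (F p c) - ln (F q c)) <= sumIx K (fun k => Aw k * dw p q k) + Au * du p q.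
Proof.
  intros Hp Hq.
  set (g := fun s => ln (F (gam p q s) c)).
  set (g' := fun t => / F (gam p q t) c *
     lsum (allc K n1 d) (fun c' => dF c c' (gam p q t) * (gam p q t c' * (ln (q c') - ln (p c'))))).
  assert (HB : forall t, 0 <= t <= 1 -> Bpp pw pu rw ru (gam p q t))
    by (intros; apply gam_B; auto).
  destruct (MVT_cor2 g g' 0 1 Rlt_0_1) as [xi [Hxi Hxi']].
  { intros t Ht. specialize (HB t Ht).
    pose proof (lemC F dF Om hOopen hC1 (gam p q t) c (gam p q) t
       (fun c' => gam p q t c' * (ln (q c') - ln (p c'))) (hBO _ HB) eq_refl
       (fun c' => gam_deriv p q c' t)) as H.
    unfold g, g'.
    pose proof (derivable_pt_lim_comp _ ln t _ _ H
       (derivable_pt_lim_ln _ (hFpos _ HB c))) as H2.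
    exact H2. }
  unfold g in Hxi. rewrite gam_0, gam_1 in Hxi by (apply Hp || apply Hq).
  rewrite Rabs_minus_sym, Hxi, Rminus_0_r, Rmult_1_r.
  assert (Hx : 0 <= xi <= 1) by lra.
  specialize (HB xi Hx). set (P := gam p q xi) in *.
  pose proof (hFpos P HB c) as HF.
  unfold g'. fold P. rewrite Rabs_mult, Rabs_inv, (Rabs_right (F P c)) by lra.
  apply (Rmult_le_reg_l (F P c)); auto.
  rewrite <- Rmult_assoc, Rinv_r, Rmult_1_l by lra. rewrite Rmult_comm.
  apply grad_bound; [apply gam_pos| |]; intros; [apply hgw| apply hgu]; auto.
Qed.

Theorem mainTheorem6 (K n1 d : nat) (pw pu rw ru : R)
  (hpw : 1 < pw) (hpu : 1 < pu) (hrw : 0 < rw) (hru : 0 < ru)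
  (F : pt K n1 d -> pt K n1 d)
  (dF : coord K n1 d -> coord K n1 d -> pt K n1 d -> R)
  (Om : pt K n1 d -> Prop)
  (hOopen : open_V Om) (hOV : forall p, Om p -> Vpp p)
  (hBO : forall p, Bpp pw pu rw ru p -> Om p)
  (hC1 : C1_on Om F dF)
  (hFpos : forall p, Bpp pw pu rw ru p -> Vpp (F p))
  (A : nat -> nat -> R)
  (hA : forall i k, (i <= K)%nat -> (k <= K)%nat -> 0 <= A i k)
  (hww : forall (i k : Ix K) (j : Ix n1) p, Bpp pw pu rw ru p ->
     gw dF (inl (i, j)) k p <= A (proj1_sig i) (proj1_sig k) * F p (inl (i, j)))
  (hwu : forall (i : Ix K) (j : Ix n1) p, Bpp pw pu rw ru p ->
     gu dF (inl (i, j)) p <= A (proj1_sig i) K * F p (inl (i, j)))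
  (huw : forall (k : Ix K) (a : Ix n1) (b : Ix d) p, Bpp pw pu rw ru p ->
     gw dF (inr (a, b)) k p <= A K (proj1_sig k) * F p (inr (a, b)))
  (huu : forall (a : Ix n1) (b : Ix d) p, Bpp pw pu rw ru p ->
     gu dF (inr (a, b)) p <= A K K * F p (inr (a, b))) :
  forall (gamma : nat -> R), (forall k, (k <= K)%nat -> 0 < gamma k) ->
  forall p q, Bpp pw pu rw ru p -> Bpp pw pu rw ru q ->
    mu_gamma gamma (F p) (F q) <= Ubound K A gamma * mu_gamma gamma p q.
Proof.
  intros gamma Hgam p q Hp Hq.
  set (D := fun k => match lt_dec k K with left h => dw p q (exist _ k h) | right _ => du p q end).
  assert (HD : forall k, 0 <= D k).
  { intros k; unfold D; destruct lt_dec; [apply maxIx_ge0| apply maxIx_ge0]. }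
  set (T := fun r => sumN (S K) (fun k => A r k * D k)).
  assert (HT0 : forall r, (r <= K)%nat -> 0 <= T r).
  { intros r Hr; unfold T. apply Rle_trans with (sumN (S K) (fun _ => 0)).
    - clear; induction (S K); simpl; lra.
    - apply sumN_le; intros k Hk. apply Rmult_le_pos; [apply hA; lia| apply HD]. }
  assert (HTeq : forall r, sumIx K (fun k => A r (proj1_sig k) * dw p q k) + A r K * du p q = T r).
  { intros r; unfold T; simpl. f_equal.
    - apply sumIx_eq; intros k h. unfold D. destruct lt_dec; [|lia].
      f_equal; f_equal; apply Ix_eq; reflexivity.
    - unfold D; destruct lt_dec; [lia| reflexivity]. }
  assert (HmuD : mu_gamma gamma p q = sumN (S K) (fun k => gamma k * D k)).
  { unfold mu_gamma; simpl. f_equal.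
    - apply sumIx_eq; intros k h. unfold D. destruct lt_dec; [|lia].
      match goal with l : (k < K)%nat |- _ => replace l with h by apply Peano_dec.le_unique end.
      reflexivity.
    - unfold D; destruct lt_dec; [lia| reflexivity]. }
  assert (Hw : forall (i : Ix K) (j : Ix n1),
    Rabs (ln (wc (F p) i j) - ln (wc (F q) i j)) <= T (proj1_sig i)).
  { intros i j. rewrite <- HTeq. unfold wc.
    apply (coord_bound pw pu rw ru hpw hpu hrw hru F dF Om hOopen hBO hC1 hFpos (inl (i, j))
      (fun k => A (proj1_sig i) (proj1_sig k)) (A (proj1_sig i) K)); auto. }
  assert (Hu : forall (a : Ix n1) (b : Ix d),
    Rabs (ln (uc (F p) a b) - ln (uc (F q) a b)) <= T K).
  { intros a b. rewrite <- HTeq. unfold uc.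
    apply (coord_bound pw pu rw ru hpw hpu hrw hru F dF Om hOopen hBO hC1 hFpos (inr (a, b))
      (fun k => A K (proj1_sig k)) (A K K)); auto. }
  apply Rle_trans with (sumN (S K) (fun i => gamma i * T i)).
  - unfold mu_gamma; simpl. apply Rplus_le_compat.
    + rewrite <- (sumIx_eq K (fun i => gamma (proj1_sig i) * T (proj1_sig i))) by reflexivity.
      apply sumIx_le; intros i. destruct i as [i hi]; simpl.
      apply Rmult_le_compat_l; [left; apply Hgam; lia|].
      apply maxIx_le; [apply HT0; lia|]. intros j; apply (Hw (exist _ i hi)).
    + apply Rmult_le_compat_l; [left; apply Hgam; lia|].
      apply maxIx_le; [apply HT0; lia|]. intros a.
      apply maxIx_le; [apply HT0; lia|]. intros b. apply Hu.
  - rewrite HmuD. unfold T.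
    replace (sumN (S K) (fun i => gamma i * sumN (S K) (fun k => A i k * D k)))
      with (sumN (S K) (fun k => D k * sumN (S K) (fun i => A i k * gamma i))).
    + rewrite <- sumN_scal. apply sumN_le; intros k Hk.
      replace (Ubound K A gamma * (gamma k * D k)) with (D k * (Ubound K A gamma * gamma k)) by ring.
      apply Rmult_le_compat_l; [apply HD|].
      assert (Hg : 0 < gamma k) by (apply Hgam; lia).
      assert (sumN (S K) (fun i => A i k * gamma i) / gamma k <= Ubound K A gamma).
      { unfold Ubound. apply (maxN_ge (S K) (fun k => sumN (S K) (fun i => A i k * gamma i) / gamma k) k Hk). }
      apply (Rmult_le_compat_r (gamma k)) in H; [|lra].
      unfold Rdiv in H; rewrite Rmult_assoc, Rinv_l, Rmult_1_r in H; lra.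
    + transitivity (sumN (S K) (fun k => sumN (S K) (fun i => gamma i * (A i k * D k)))).
      * apply sumN_ext; intros k _; rewrite <- sumN_scal; apply sumN_ext; intros; ring.
      * rewrite sumN_exch. apply sumN_ext; intros i _. rewrite <- sumN_scal. reflexivity.
Qed.
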